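(* Let $X_1,\ldots,X_n$ be independent and uniformly distributed on $\{1,\ldots,n\}$ under $\mathbb{P}$, let $Y_q:=\#\{1\le i\le n:q\mid X_i\}$ for primes $q$, and $S(k,n):=\{q\in\mathcal{P}:k<q\le n\}$. Then for every $\epsilon>0$, \[ \limsup_{k\to\infty}\limsup_{n\to\infty}\frac{1}{n}\log\mathbb{P}\left(\sum_{q\in S(k,n)}Y_{q}^{2}>n^{2}\epsilon\right)=-\infty. \]
   Context: $\mathcal{P}$ denotes the set of primes. *)

(* Defs.v *)
From Stdlib Require Import Reals.
From mathcomp Require Import all_boot.

(* A sample point (X_1,...,X_n) in {1..n}^n is encoded as x : {ffun 'I_n -> 'I_n},
   with X_(i+1) = (x i).+1. *)

Definition Yq (n q : nat) (x : {ffun 'I_n -> 'I_n}) : nat :=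
  #|[set i : 'I_n | q %| (x i).+1]|.

Definition sumSq (n k : nat) (x : {ffun 'I_n -> 'I_n}) : nat :=
  \sum_(k.+1 <= q < n.+1 | prime q) expn (Yq n q x) 2.

Definition Rltb (a b : R) : bool := if Rlt_dec a b then true else false.

Definition probEvent (n k : nat) (eps : R) : R :=
  Rdiv (INR #|[set x : {ffun 'I_n -> 'I_n} | Rltb (Rmult (Rmult (INR n) (INR n)) eps) (INR (sumSq n k x))]|)
       (INR #|{ffun 'I_n -> 'I_n}|).

(* Main.v *)
Require Import Defs.
From Stdlib Require Import Reals Lra Lia ZArith Psatz.
From mathcomp Require Import all_boot zify.
Set Warnings "-notation-overridden".

Lemma sum_mult_div n L : 0 < L -> \sum_(m < n) (L %| m.+1) = n %/ L.
Proof.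
move=> L0; elim: n => [|n IH]; first by rewrite big_ord0 div0n.
by rewrite big_ord_recr /= IH divnS // addnC.
Qed.

Lemma card_mult_le n L (A : {pred 'I_n}) : 0 < L ->
  (forall m, m \in A -> L %| m.+1) -> #|A| * L <= n.
Proof.
move=> L0 HA.
have -> : #|A| = \sum_(m < n) (m \in A).
  by rewrite -sum1_card big_mkcond /=; apply: eq_bigr => i _; case: (i \in A).
apply: (leq_trans _ (leq_divM n L)); rewrite leq_mul2r -sum_mult_div //.
apply/orP; right; apply: leq_sum => i _; case: (boolP (i \in A)) => // /HA ->.
by [].
Qed.

Lemma coprime_prod_primes p s : prime p -> all prime s -> p \notin s ->
  coprime p (\prod_(q <- s) q).
Proof.
move=> pp; elim: s => [|q s IH] /=; first by rewrite big_nil coprimen1.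
move=> /andP[pq ps]; rewrite inE negb_or => /andP[pnq pns].
rewrite big_cons coprimeMr IH // andbT prime_coprime // dvdn_prime2 //.
Qed.

Lemma prod_primes_dvd s m : uniq s -> all prime s -> all (fun p => p %| m) s ->
  \prod_(q <- s) q %| m.
Proof.
elim: s => [|q s IH] /=; first by rewrite big_nil dvd1n.
move=> /andP[qs us] /andP[pq ps] /andP[qm sm].
rewrite big_cons Gauss_dvd ?qm ?IH //.
exact: coprime_prod_primes.
Qed.

Lemma sum_sets n a b : \sum_(J : {set 'I_n}) a ^ #|J| * b ^ (n - #|J|) = (a + b) ^ n.
Proof.
have -> : (a + b) ^ n = \prod_(i < n) (a + b) by rewrite prod_nat_const card_ord.
rewrite bigA_distr; apply: eq_bigr => J _.
rewrite (bigID (mem J)) /=.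
rewrite (eq_bigr (fun _ => a)); last by move=> i ->.
rewrite [\prod_(i | ~~ _) _](eq_bigr (fun _ => b)); last by move=> i /negbTE ->.
rewrite !prod_nat_const; congr (_ * _); congr (_ ^ _).
have Hc : #|J| + #|~: J| = n by rewrite cardsC card_ord.
have Hp : #|[pred i | i \notin J]| = #|~: J| by apply: eq_card => i; rewrite !inE.
rewrite [RHS](_ : _ = #|~: J|); first by rewrite -{1}Hc addKn. by apply: eq_card => i; rewrite !inE.
Qed.


Section RealL.
Local Open Scope R_scope.
Lemma exp_ge1 (x : R) : (1 + x <= exp x).
Proof. exact: exp_ineq1_le. Qed.

Lemma exp_le (x y : R) : (x <= y) -> (exp x <= exp y).
Proof.
move=> [H|->]; [by apply: Rlt_le; apply: exp_increasing | exact: Rle_refl].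
Qed.

Lemma exp_pow_n (x : R) (n : nat) : (exp x ^ n = exp (INR n * x)).
Proof.
elim: n => [|n IH]; first by rewrite /= Rmult_0_l exp_0.
rewrite S_INR -tech_pow_Rmult IH -exp_plus; congr exp; lra.
Qed.

Lemma INR_expn (m e : nat) : INR (m ^ e)%N = INR m ^ e.
Proof.
elim: e => [|e IH]; first by rewrite expn0.
by rewrite expnS mult_INR IH -tech_pow_Rmult.
Qed.
End RealL.

Open Scope R_scope.
Lemma pow_bound (q s n t : nat) : (0 < q)%N -> (s * n <= q * t)%N -> ((q + s) ^ n <= 3 ^ t * q ^ n)%N.
Proof.
move=> q0 Hst.
have qR : (0 < INR q) by apply: lt_0_INR; apply/ltP.
have HstR : (INR s * INR n <= INR q * INR t).
  by rewrite -!mult_INR; apply: le_INR; apply/leP.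
apply/leP; apply: INR_le.
rewrite mult_INR !INR_expn plus_INR.
have -> : (INR q + INR s = INR q * (1 + INR s / INR q)) by field; lra.
rewrite Rpow_mult_distr Rmult_comm; apply: Rmult_le_compat_r; first by apply: pow_le; lra.
have Hs : (0 <= INR s / INR q) by apply: Rmult_le_pos; [apply: pos_INR | apply: Rlt_le; apply: Rinv_0_lt_compat; lra].
apply: Rle_trans (_ : exp (INR s / INR q) ^ n <= _).
  apply: pow_incr; split; [lra | apply: exp_ge1].
rewrite exp_pow_n.
apply: Rle_trans (_ : exp (INR t) <= _).
  apply: exp_le.
  have : (INR n * (INR s / INR q) = INR s * INR n / INR q) by field; lra.
  move=> ->; apply: (Rmult_le_reg_r (INR q)) => //.
  have -> : (INR s * INR n / INR q * INR q = INR s * INR n) by field; lra.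
  lra.
rewrite -[INR t]Rmult_1_r -exp_pow_n.
apply: pow_incr; split; [apply: Rlt_le; apply: exp_pos | ]. have := exp_le_3. rewrite (_ : INR 3 = 3) //. simpl; lra.
Qed.

Close Scope R_scope.
Lemma telescope (k N : nat) (a : nat -> nat) : 0 < k ->
  (forall q, k < q -> a q * (q * q) <= N) ->
  forall d, k * (k + d) * \sum_(k.+1 <= q < (k + d).+1) a q <= N * d.
Proof.
move=> k0 Ha; elim=> [|d IH].
  by rewrite addn0 big_geq // muln0.
rewrite addnS big_nat_recr /=; last by lia.
set S := \sum_(_ <= _ < _) _.
have h1 : (k + d).+1 * (k * (k + d) * S) <= (k + d).+1 * (N * d) by rewrite leq_mul2l IH orbT.
have h2 : a (k + d).+1 * ((k + d).+1 * (k + d).+1) <= N by apply: Ha; lia.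
have h3 : k * (a (k + d).+1 * ((k + d) * (k + d).+1)) <= k * N.
  rewrite leq_mul2l; apply/orP; right; apply: leq_trans h2.
  by rewrite leq_mul2l leq_mul2r leqnSn !orbT.
have : (k + d) * (k * (k + d).+1 * (S + a (k + d).+1)) <= (k + d) * (N * d.+1) by lia.
by rewrite leq_mul2l => /orP [|//]; lia.
Qed.

Lemma conv_sum (n k : nat) (P : pred nat) (F : nat -> nat) :
  \sum_(k.+1 <= q < n.+1 | P q) F q = \sum_(q < n.+1 | (k < q) && P q) F q.
Proof.
rewrite (big_nat_widenl _ 0) // big_mkord; apply: eq_bigl => q; by rewrite andbC.
Qed.

Section Count.
Variables (n k C D : nat).

Definition inP (q : 'I_n.+1) := (k < q) && prime q.
Definition Sq (q : nat) (x : {ffun 'I_n -> 'I_n}) : {set 'I_n} := [set i | q %| (x i).+1].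
Definition cw (q : 'I_n.+1) (I : {set 'I_n}) : nat :=
  (I == set0) + (inP q && (C * n <= q * #|I|)) * D ^ #|I|.
Definition ww (q : 'I_n.+1) : nat := if inP q then val q else 1.

Lemma key (f : {ffun 'I_n.+1 -> {set 'I_n}}) : (forall q, f q != set0 -> inP q) ->
  #|[set x : {ffun 'I_n -> 'I_n} | [forall q, f q \subset Sq q x]]|
     * \prod_q ww q ^ #|f q| <= n ^ n.
Proof.
move=> Hf.
pose A i := [pred m : 'I_n | [forall q : 'I_n.+1, (i \in f q) ==> (val q %| m.+1)]].
have -> : #|[set x : {ffun 'I_n -> 'I_n} | [forall q, f q \subset Sq q x]]| = #|family A|.
  apply: eq_card => x; rewrite inE; apply/forallP/familyP => H.
    move=> i; apply/forallP => q; apply/implyP => iq.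
    by have /subsetP /(_ i iq) := H q; rewrite inE.
  move=> q; apply/subsetP => i iq; rewrite inE.
  by have /forallP /(_ q) /implyP /(_ iq) := H i.
rewrite card_family foldrE big_map big_enum /=.
have -> : \prod_q ww q ^ #|f q| = \prod_(i < n) \prod_(q | i \in f q) ww q.
  rewrite (eq_bigr (fun q => \prod_(i < n) if i \in f q then ww q else 1)); last first.
    by move=> q _; rewrite -big_mkcond prod_nat_const.
  rewrite exchange_big; apply: eq_bigr => i _; by rewrite [RHS]big_mkcond.
rewrite -big_split /=.
have -> : n ^ n = \prod_(i < n) n by rewrite prod_nat_const card_ord.
apply: leq_prod => i _.
have Hw : \prod_(q | i \in f q) ww q = \prod_(q | i \in f q) val q.
  apply: eq_bigr => q iq; rewrite /ww.
  have -> // : inP q by apply: Hf; apply/set0Pn; exists i.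
rewrite Hw; apply: card_mult_le.
  apply: prodn_cond_gt0 => q iq.
  by have /andP[_ /prime_gt0] : inP q by apply: Hf; apply/set0Pn; exists i.
move=> m Am.
rewrite -big_filter -(big_map val xpredT (fun p => p)).
apply: prod_primes_dvd.
- by rewrite map_inj_uniq ?filter_uniq ?index_enum_uniq //; exact: val_inj.
- apply/allP => p /mapP [q]; rewrite mem_filter => /andP[iq _] ->.
  by have /andP[_ ->] : inP q by apply: Hf; apply/set0Pn; exists i.
- apply/allP => p /mapP [q]; rewrite mem_filter => /andP[iq _] ->.
  by have /forallP /(_ q) /implyP /(_ iq) := Am.
Qed.

Definition G x := \prod_(q : 'I_n.+1) \sum_(I : {set 'I_n}) (I \subset Sq q x) * cw q I.
Definition H q := \sum_(I : {set 'I_n}) cw q I * ww q ^ (n - #|I|).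

Lemma prod_bool (I : finType) (b : I -> bool) :
  \prod_i (b i : nat) = [forall i, b i].
Proof.
case: (boolP [forall i, b i]) => [/forallP Hb | /forallPn [i /negbTE bi]].
  by rewrite big1 // => i _; rewrite Hb.
by rewrite (bigD1 i) //= bi.
Qed.

Lemma count_main : (\sum_x G x) * \prod_q ww q ^ n <= n ^ n * \prod_q H q.
Proof.
have E1 : \sum_x G x = \sum_(f : {ffun 'I_n.+1 -> {set 'I_n}})
     (\prod_q cw q (f q)) * #|[set x : {ffun 'I_n -> 'I_n} | [forall q, f q \subset Sq q x]]|.
  rewrite /G; under eq_bigr do rewrite bigA_distr_bigA.
  rewrite exchange_big; apply: eq_bigr => f _.
  under eq_bigr do rewrite big_split /= prod_bool.
  rewrite -big_distrl /= mulnC; congr (_ * _).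
  rewrite -sum1_card [RHS]big_mkcond /=; apply: eq_bigr => x _.
  by rewrite inE; case: [forall q, _].
rewrite E1 /H bigA_distr_bigA big_distrl big_distrr /=.
apply: leq_sum => f _.
set a := \prod_q cw q (f q).
case: (posnP a) => [-> | apos]; first by rewrite !mul0n.
have Hf : forall q, f q != set0 -> inP q.
  move=> q fq; move: apos; rewrite /a (bigD1 q) //= /cw (negbTE fq) add0n.
  by case: (inP q).
have Hk := @key f Hf.
have -> : \prod_q ww q ^ n = \prod_q ww q ^ #|f q| * \prod_q ww q ^ (n - #|f q|).
  rewrite -big_split /=; apply: eq_bigr => q _; rewrite -expnD subnKC //.
  by apply: leq_trans (max_card _) _; rewrite card_ord.
rewrite big_split /= -/a.
set X := #|_|; set b := \prod_q ww q ^ #|f q|; set r := \prod_q _.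
have : a * r * (X * b) <= a * r * n ^ n by rewrite leq_mul2l Hk orbT.
lia.
Qed.

Lemma G_lower x : 0 < n -> 0 < C ->
  D ^ (\sum_(q : 'I_n.+1 | inP q && (C * n <= q * Yq n q x)) Yq n q x) <= G x.
Proof.
move=> n0 C0; rewrite expn_sum /G big_mkcond /=; apply: leq_prod => q _.
have HY : Yq n q x = #|Sq q x| by [].
have Cn0 : (C * n <= q * 0) = false by rewrite muln0 leqn0 muln_eq0 -!leqn0 leqNgt C0 leqNgt n0.
rewrite (bigD1 set0) //= sub0set /cw cards0 eqxx Cn0 andbF /= mul1n.
case: ifP => [/andP[Pq HC] | _]; last by rewrite leq_addr.
have Sne : Sq q x != set0.
  apply/negP => /eqP S0; move: HC; rewrite HY S0 cards0 Cn0 //.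
rewrite (bigD1 (Sq q x)) //= subxx (negbTE Sne) Pq -HY HC /=.
rewrite mul1n add0n mul1n; lia.
Qed.

Lemma A_bound (q : nat) : 0 < q -> C = 3 * D ->
  \sum_(I : {set 'I_n}) (C * n <= q * #|I|) * D ^ #|I| * q ^ (n - #|I|) <= q ^ n.
Proof.
move=> q0 CD.
set t := (C * n + q.-1) %/ q.
have ht1 : forall y, C * n <= q * y -> t <= y.
  move=> y Hy; rewrite -ltnS ltn_divLR //; lia.
have ht2 : C * n <= q * t.
  have := divn_eq (C * n + q.-1) q; have := ltn_pmod (C * n + q.-1) q0.
  rewrite -/t; lia.
have H3 : 0 < 3 ^ t by rewrite expn_gt0.
set A := \sum_(I : {set _}) _.
suff : 3 ^ t * A <= 3 ^ t * q ^ n by rewrite leq_pmul2l.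
rewrite /A big_distrr /=.
apply: leq_trans (_ : \sum_(I : {set 'I_n}) (3 * D) ^ #|I| * q ^ (n - #|I|) <= _).
  apply: leq_sum => I _; case HI: (C * n <= q * #|I|); last by rewrite !mul0n muln0.
  rewrite mul1n mulnA expnMn leq_mul2r; apply/orP; right.
  by rewrite leq_mul2r leq_pexp2l ?ht1 ?orbT.
rewrite sum_sets addnC; apply: pow_bound => //; lia.
Qed.

Lemma H_bound (q : 'I_n.+1) : 0 < n -> C = 3 * D -> 0 < C -> H q <= 2 * ww q ^ n.
Proof.
move=> n0 CD C0; rewrite /H /cw /ww.
case: (boolP (inP q)) => Pq; last first.
  rewrite (bigD1 set0) //= eqxx big1 ?exp1n //= => I /negbTE ->.
  by rewrite mul0n.
rewrite (eq_bigr (fun I : {set 'I_n} => (I == set0) * val q ^ (n - #|I|) +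
   (C * n <= q * #|I|) * D ^ #|I| * val q ^ (n - #|I|))); last by move=> I _; rewrite mulnDl.
rewrite big_split /= mul2n -addnn leq_add //.
  rewrite (bigD1 set0) //= eqxx cards0 subn0 big1 ?mul1n ?addn0 // => I /negbTE ->.
  by rewrite mul0n.
have qpos : 0 < q by move: Pq => /andP[_ /prime_gt0].
exact: (@A_bound q qpos CD).
Qed.
End Count.

Lemma stepA n k C x : 0 < k -> 0 < n ->
  k * sumSq n k x <= k * n * (\sum_(q : 'I_n.+1 | inP n k q && (C * n <= q * Yq n q x)) Yq n q x)
     + (C * n) ^ 2.
Proof.
move=> k0 n0.
have Yle : forall q, Yq n q x <= n.
  by move=> q; rewrite /Yq; apply: leq_trans (max_card _) _; rewrite card_ord.
rewrite /sumSq conv_sum (bigID (fun q : 'I_n.+1 => C * n <= q * Yq n q x)) /= mulnDr.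
apply: leq_add.
  rewrite -mulnA leq_mul2l; apply/orP; right; rewrite big_distrr /=.
  by apply: leq_sum => q _; rewrite -mulnn leq_mul2r Yle orbT.
case: (leqP k n) => kn; last first.
  rewrite big1 ?muln0 // => q /andP[/andP[kq _] _].
  by move: (ltn_ord q); rewrite ltnS => qn; move: (leq_ltn_trans qn kn); rewrite ltnNge (ltnW kq).
pose a := fun q => if prime q && ~~ (C * n <= q * Yq n q x) then Yq n q x ^ 2 else 0.
have Ha : forall q, k < q -> a q * (q * q) <= (C * n) ^ 2.
  move=> q _; rewrite /a; case: ifP => [/andP[_ h] | _]; last by [].
  rewrite -ltnNge in h.
  have -> : Yq n q x ^ 2 * (q * q) = (q * Yq n q x) * (q * Yq n q x) by rewrite -mulnn; lia.
  by rewrite -mulnn; apply: leq_mul; apply: ltnW.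
have T := @telescope k ((C * n) ^ 2) a k0 Ha (n - k).
rewrite subnKC // conv_sum in T.
have E : \sum_(q < n.+1 | ((k < q) && prime q) && ~~ (C * n <= q * Yq n q x)) Yq n q x ^ 2
       = \sum_(q < n.+1 | (k < q) && true) a q.
  rewrite big_mkcond [RHS]big_mkcond; apply: eq_bigr => q _ /=.
  by rewrite andbT /a; case: (k < q); case: (prime q).
rewrite E.
have T2 := leq_trans T (leq_mul (leqnn ((C * n) ^ 2)) (leq_subr k n)).
by rewrite mulnAC leq_pmul2r in T2.
Qed.

Open Scope R_scope.

Lemma INR_toNat_ge z : IZR z <= INR (Z.to_nat z).
Proof.
case: (Z.le_gt_cases 0 z) => h.
  rewrite INR_IZR_INZ Z2Nat.id //; lra.
have -> : Z.to_nat z = 0%nat by lia.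
simpl; apply: IZR_le; lia.
Qed.

Lemma ge_up (m : nat) r : r < INR m -> (Z.to_nat (up r) <= m)%N.
Proof.
move=> H; case: (archimed r) => h1 h2.
rewrite leqNgt; apply/negP => /ltP Hlt.
have Hz : (Z.of_nat m + 1 <= up r)%Z by lia.
have := IZR_le _ _ Hz; rewrite plus_IZR -INR_IZR_INZ; lra.
Qed.

Lemma Rltb_true a b : Rltb a b = true -> a < b.
Proof. by rewrite /Rltb; case: (Rlt_dec a b). Qed.

Lemma three_pow_ge (m : nat) : exp (INR m) <= 3 ^ m.
Proof.
rewrite -[INR m]Rmult_1_r -exp_pow_n.
apply: pow_incr; split; [apply: Rlt_le; apply: exp_pos | ].
by have := exp_le_3.
Qed.

Lemma two_pow_le (m : nat) : 2 ^ m <= exp (INR m).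
Proof.
rewrite -[INR m]Rmult_1_r -exp_pow_n.
apply: pow_incr; split; [lra | ].
by have := exp_ineq1_le 1; lra.
Qed.

Theorem theorem3p8 :
  forall eps : R, Rlt 0 eps ->
  forall M : R, exists K : nat, forall k : nat, (K <= k)%nat ->
  exists N : nat, forall n : nat, (N <= n)%nat ->
    Rlt (probEvent n k eps) (exp (Rmult (INR n) M)).
Proof.
move=> eps eps0 M.
pose j := Z.to_nat (up (2 * (2 - M) / eps)).
have Hj : 2 - M < INR j * eps / 2.
  have := INR_toNat_ge (up (2 * (2 - M) / eps)); case: (archimed (2 * (2 - M) / eps)) => h1 _.
  rewrite -/j => h2.
  have h3 : 2 * (2 - M) / eps < INR j by lra.
  have : 2 * (2 - M) / eps * eps < INR j * eps by apply: Rmult_lt_compat_r.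
  have -> : 2 * (2 - M) / eps * eps = 2 * (2 - M) by field; lra.
  lra.
pose D := (3 ^ j)%N.
pose C := (3 * D)%N.
have D0 : (0 < D)%N by rewrite expn_gt0.
have C0 : (0 < C)%N by rewrite muln_gt0.
pose K := (Z.to_nat (up (2 * INR C ^ 2 / eps))).+1.
exists K => k hk; exists 1%nat => n hn.
have k0 : (0 < k)%N by apply: leq_trans hk.
have n0 : (0 < n)%N by [].
have kR : 2 * INR C ^ 2 / eps <= INR k.
  have := INR_toNat_ge (up (2 * INR C ^ 2 / eps)); case: (archimed (2 * INR C ^ 2 / eps)) => h1 _ h2.
  have : INR (Z.to_nat (up (2 * INR C ^ 2 / eps))) <= INR k.
    apply: le_INR; apply/leP; exact: leq_trans (leqnSn _) hk.
  lra.
have kpos : 0 < INR k by apply: lt_0_INR; apply/ltP.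
have npos : 0 < INR n by apply: lt_0_INR; apply/ltP.
pose r := eps * INR n / 2.
pose m0 := Z.to_nat (up r).
pose SB := fun x => (\sum_(q : 'I_n.+1 | inP n k q && (C * n <= q * Yq n q x)) Yq n q x)%N.
pose Bad := [set x : {ffun 'I_n -> 'I_n} | Rltb (INR n * INR n * eps) (INR (sumSq n k x))].
have HB : forall x, x \in Bad -> (m0 <= SB x)%N.
  move=> x; rewrite inE => /Rltb_true Hs.
  apply: ge_up.
  have HA := @stepA n k C x k0 n0.
  have HAR : INR k * INR (sumSq n k x) <= INR k * INR n * INR (SB x) + (INR C * INR n) ^ 2.
    have := le_INR _ _ (elimT leP HA).
    by rewrite plus_INR (mult_INR k) (mult_INR (k * n)) (mult_INR k n) (INR_expn (C * n)) (mult_INR C n).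
  have hC : INR C ^ 2 <= INR k * eps / 2.
    have : 2 * INR C ^ 2 / eps * eps <= INR k * eps by apply: Rmult_le_compat_r; lra.
    have -> : 2 * INR C ^ 2 / eps * eps = 2 * INR C ^ 2 by field; lra.
    lra.
  have h1 : INR k * (INR n * INR n * eps) < INR k * INR (sumSq n k x) by apply: Rmult_lt_compat_l.
  have h2 : (INR C * INR n) ^ 2 <= INR k * eps / 2 * (INR n * INR n).
    rewrite Rpow_mult_distr; apply: Rmult_le_compat; try nra.
  have h3 : 0 < INR k * INR n * (INR (SB x) - r) by rewrite /r; nra.
  have h4 : 0 < INR k * INR n by nra.
  have h5 := Rmult_lt_reg_l (INR k * INR n) 0 (INR (SB x) - r) h4.
  rewrite Rmult_0_r in h5; have := h5 h3; rewrite /SB /r; lra.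
have S1 : (#|Bad| * D ^ m0 <= \sum_x G n k C D x)%N.
  apply: (@leq_trans (\sum_(x in Bad) G n k C D x)).
    rewrite -sum1_card big_distrl /=; apply: leq_sum => x xB; rewrite mul1n.
    apply: leq_trans (@G_lower n k C D x n0 C0).
    by rewrite leq_pexp2l // HB.
  by rewrite [X in (_ <= X)%N](bigID (mem Bad)) /= leq_addr.
have S2 : (\sum_x G n k C D x <= n ^ n * 2 ^ n.+1)%N.
  have Pw : (0 < \prod_q ww n k q ^ n)%N.
    apply: prodn_gt0 => q; rewrite expn_gt0 /ww.
    case Hq: (inP n k q) => //.
    by move: Hq => /andP[_ /prime_gt0] ->.
  rewrite -(leq_pmul2r Pw); apply: leq_trans (@count_main n k C D) _.
  rewrite -mulnA leq_mul2l; apply/orP; right.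
  have -> : (2 ^ n.+1 * \prod_q ww n k q ^ n = \prod_(q < n.+1) (2 * ww n k q ^ n))%N.
    by rewrite big_split /= prod_nat_const card_ord.
  by apply: leq_prod => q _; apply: H_bound.
have S3 : (#|Bad| * 3 ^ (j * m0) <= n ^ n * 2 ^ n.+1)%N.
  by rewrite expnM; exact: leq_trans S1 S2.
have S3R := le_INR _ _ (elimT leP S3).
rewrite !mult_INR !INR_expn in S3R.
rewrite /probEvent card_ffun !card_ord -/Bad INR_expn.
set B := INR #|Bad|.
have B0 : 0 <= B by apply: pos_INR.
have P0 : 0 < INR n ^ n by apply: pow_lt.
have m0R : r <= INR m0.
  have := INR_toNat_ge (up r); case: (archimed r) => h1 _; rewrite -/m0; lra.
have X : exp (INR j * r) <= INR 3 ^ (j * m0).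
  apply: Rle_trans (_ : exp (INR (j * m0)) <= _); first last.
    have := three_pow_ge (j * m0); suff -> : INR 3 = 3 by []. by simpl; lra.
  apply: exp_le; rewrite mult_INR; apply: Rmult_le_compat_l => //; apply: pos_INR.
have Y := two_pow_le n.+1.
have Y' : INR 2 ^ n.+1 <= exp (INR n.+1) by suff -> : INR 2 = 2 by []; simpl; lra.
have Z1 : B * exp (INR j * r) <= INR n ^ n * exp (INR n.+1).
  apply: Rle_trans (_ : B * INR 3 ^ (j * m0) <= _); first by apply: Rmult_le_compat_l.
  apply: Rle_trans S3R _; apply: Rmult_le_compat_l => //; lra.
have E0 : 0 < exp (INR j * r) by apply: exp_pos.
have Z2 : B / INR n ^ n <= exp (INR n.+1 - INR j * r).
  have -> : exp (INR n.+1 - INR j * r) = exp (INR n.+1) / exp (INR j * r).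
    rewrite /Rminus exp_plus exp_Ropp; field; lra.
  apply: (Rmult_le_reg_r (INR n ^ n * exp (INR j * r))); first by apply: Rmult_lt_0_compat.
  have -> : B / INR n ^ n * (INR n ^ n * exp (INR j * r)) = B * exp (INR j * r) by field; lra.
  have -> : exp (INR n.+1) / exp (INR j * r) * (INR n ^ n * exp (INR j * r)) = INR n ^ n * exp (INR n.+1) by field; lra.
  exact: Z1.
apply: Rle_lt_trans Z2 _; apply: exp_increasing.
have n1 : 1 <= INR n by apply: (le_INR 1); apply/leP.
rewrite S_INR /r.
have : (2 - M) * INR n < INR j * eps / 2 * INR n by apply: Rmult_lt_compat_r.
nra.
Qed.
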